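(* Let $V\subset\mathbb{R}^d$ be the closure of a bounded domain. There exists a constant $C>0$ such that for all $\rho^i=h_i\delta_{\gamma_i}\in\mathscr{C}_V$, $i=1,2$, $$\frac1C\,H^2(\rho^1,\rho^2)\le d_F(\rho^1,\rho^2)\le C\sqrt{h_1+h_2}\,H(\rho^1,\rho^2).$$ In particular $H$ and $d_F$ induce the same topology on $\mathscr{C}_V$.
   Context: $\mathscr{C}_V:=\{h\delta_\gamma\in\mathcal{M}(V):h\ge0,\ \gamma\in V\}$. The flat distance is $d_F(\rho^1,\rho^2):=\sup\{\int_V\varphi\,d(\rho^1-\rho^2):\varphi\in C(V),\ \|\varphi\|_\infty\le1,\ \mathrm{Lip}(\varphi)\le1\}$. The Hellinger–Kantorovich distance $H\ge0$ on $\mathscr{C}_V$ is given by $$H^2(\rho^1,\rho^2)=\begin{cases}h_1+h_2-2\sqrt{h_1h_2}\cos(|\gamma_1-\gamma_2|)&\text{if }|\gamma_1-\gamma_2|\le\pi,\\ h_1+h_2+2\sqrt{h_1h_2}&\text{otherwise.}\end{cases}$$ *)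

(* Defs.v *)
From HB Require Import structures.
From mathcomp Require Import all_boot all_order all_algebra.
From mathcomp Require Import all_classical all_reals all_analysis.
Set Implicit Arguments. Unset Strict Implicit. Unset Printing Implicit Defensive.
Import Order.TTheory GRing.Theory Num.Theory.
Import numFieldNormedType.Exports.
Local Open Scope classical_set_scope.
Local Open Scope ring_scope.

Definition eucl {R : realType} {d : nat} (x : 'rV[R]_d) : R :=
  Num.sqrt (\sum_(i < d) x ord0 i ^+ 2).

Definition closure_of_bounded_domain {R : realType} {d : nat}
    (V : set 'rV[R]_d) : Prop :=
  exists Om : set 'rV[R]_d,
    [/\ Om !=set0, open Om, connected Om, bounded_set Om & V = closure Om].

(* An element h delta_gamma of C_V is represented by the pair (h, gamma)
   with h >= 0 and gamma in V. *)
Definition inCV {R : realType} {d : nat} (V : set 'rV[R]_d)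
    (p : R * 'rV[R]_d) : Prop := 0 <= p.1 /\ V p.2.

Definition flat_test {R : realType} {d : nat} (V : set 'rV[R]_d)
    (phi : 'rV[R]_d -> R) : Prop :=
  [/\ {within V, continuous phi},
      (forall x, V x -> `|phi x| <= 1) &
      (forall x y, V x -> V y -> `|phi x - phi y| <= eucl (x - y))].

(* d_F(h1 delta_g1, h2 delta_g2) = sup_phi int phi d(rho1 - rho2)
   = sup_phi (h1 phi(g1) - h2 phi(g2)). *)
Definition flat_dist {R : realType} {d : nat} (V : set 'rV[R]_d)
    (p1 p2 : R * 'rV[R]_d) : R :=
  sup [set r | exists phi, flat_test V phi /\
                 r = p1.1 * phi p1.2 - p2.1 * phi p2.2].

Definition HK2 {R : realType} {d : nat} (p1 p2 : R * 'rV[R]_d) : R :=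
  let h1 := p1.1 in let h2 := p2.1 in
  let r := eucl (p1.2 - p2.2) in
  if r <= pi then h1 + h2 - 2 * Num.sqrt (h1 * h2) * cos r
  else h1 + h2 + 2 * Num.sqrt (h1 * h2).

Definition HK {R : realType} {d : nat} (p1 p2 : R * 'rV[R]_d) : R :=
  Num.sqrt (HK2 p1 p2).

Definition open_in_CV {R : realType} {d : nat} (V : set 'rV[R]_d)
    (D : R * 'rV[R]_d -> R * 'rV[R]_d -> R) (U : set (R * 'rV[R]_d)) : Prop :=
  U `<=` inCV V /\
  forall p, U p -> exists2 e : R, 0 < e &
    forall q, inCV V q -> D p q < e -> U q.

(* Main.v *)
Require Import Defs.
From HB Require Import structures.
From mathcomp Require Import all_boot all_order all_algebra.
From mathcomp Require Import all_classical all_reals all_analysis.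
Import Order.TTheory GRing.Theory Num.Theory.
Local Open Scope classical_set_scope.
Local Open Scope ring_scope.
Import numFieldNormedType.Exports.
From mathcomp Require Import ring lra.
Section T.
Context {R : realType}.

Lemma mono0 (f df : R -> R) : (forall x : R, is_derive x (1:R) f (df x)) ->
  (forall x, 0 <= x -> 0 <= df x) -> 0 <= f 0 -> forall x, 0 <= x -> 0 <= f x.
Proof.
move=> fd dfp f0 x x0.
have cf : continuous f.
  by move=> y; apply/differentiable_continuous/derivable1_diffP; exact: ex_derive.
have [c] := MVT_segment x0 (fun y _ => fd y) (continuous_subspaceT cf).
rewrite in_itv /= => /andP[c0 cx] E.
have : 0 <= f x - f 0 by rewrite E subr0 mulr_ge0 // dfp.
lra.
Qed.

Lemma sin_le (x : R) : 0 <= x -> sin x <= x.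
Proof.
move=> x0; rewrite -subr_ge0.
apply: (@mono0 (fun y => y - sin y) (fun y => 1 - cos y)).
- by move=> y _; rewrite subr_ge0; exact: cos_le1.
- by rewrite sin0 subr0.
- done.
Qed.

Lemma cos_ge (x : R) : 0 <= x -> 1 - x ^+ 2 / 2 <= cos x.
Proof.
move=> x0; rewrite -subr_ge0.
apply: (@mono0 (fun y => cos y - (1 - y ^+ 2 / 2)) (fun y => y - sin y)).
- move=> y; apply: is_derive_eq.
  rewrite /GRing.scale /=; lra.
- by move=> y y0; rewrite subr_ge0 sin_le.
- by rewrite cos0 expr0n /= mul0r subr0 subrr.
- done.
Qed.
Lemma sin_ge (x : R) : 0 <= x -> x - x ^+ 3 / 6 <= sin x.
Proof.
move=> x0; rewrite -subr_ge0.
apply: (@mono0 (fun y => sin y - (y - y ^+ 3 / 6)) (fun y => cos y - (1 - y ^+ 2 / 2))).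
- move=> y; apply: is_derive_eq.
  by rewrite /GRing.scale /= !mulr0 add0r !mulr1; field.
- by move=> y y0; rewrite subr_ge0 cos_ge.
- by rewrite sin0 expr0n /= mul0r subr0 subrr.
- done.
Qed.

Lemma one_cos_le (r : R) : 0 <= r -> 1 - cos r <= r.
Proof.
move=> r0; have h1 := @cos_ge r r0; have h2 := cos_geN1 r.
have [r2|r2] := leP r 2; nra.
Qed.

Lemma one_cos_ge (r : R) : 0 <= r <= pi -> r ^+ 2 / 18 <= 1 - cos r.
Proof.
move=> /andP[r0 rpi].
set y := r / 2.
have ry : r = y *+ 2 by rewrite /y -mulr_natr mulfVK // pnatr_eq0.
have y0 : 0 <= y by rewrite /y divr_ge0.
have y2 : y <= 2.
  have hp := @pihalf_lt2 R.
  have : r / 2 <= pi / 2 by rewrite ler_pM2r // invr_gt0.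
  rewrite /y; lra.
have hs := @sin_ge y y0.
have hc := sin2cos2 y.
rewrite ry cos_mulr2n.
have h3 : y / 3 <= sin y by nra.
nra.
Qed.
Definition hk2 (a b r : R) :=
  if r <= pi then a ^+ 2 + b ^+ 2 - 2 * (a * b) * cos r
  else a ^+ 2 + b ^+ 2 + 2 * (a * b).

Lemma hk2_ge (a b r : R) : 0 <= a -> 0 <= b -> (a - b) ^+ 2 <= hk2 a b r.
Proof.
move=> a0 b0; rewrite /hk2; case: ifP => _.
  have := cos_le1 r; have : 0 <= a * b by rewrite mulr_ge0. nra.
have : 0 <= a * b by rewrite mulr_ge0. nra.
Qed.

Lemma hk2_lower (a b r D : R) : 0 <= a -> 0 <= b -> 0 <= r ->
  a ^+ 2 - b ^+ 2 <= D -> b ^+ 2 - a ^+ 2 <= D ->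
  a ^+ 2 * Num.min 1 r <= D -> b ^+ 2 * Num.min 1 r <= D -> hk2 a b r <= 5 * D.
Proof.
move=> a0 b0 r0 d1 d2 d3 d4.
have ab0 : 0 <= a * b by rewrite mulr_ge0.
have sq : (a - b) ^+ 2 <= D.
  have [ab|ab] := leP b a; nra.
have am : 2 * (a * b) <= a ^+ 2 + b ^+ 2 by have := sqr_ge0 (a - b); nra.
rewrite /hk2; case: ifP => rpi.
  have c1 := @one_cos_le r r0; have c2 := cos_geN1 r; have c3 := cos_le1 r.
  have [r1|r1] := leP r 1.
    rewrite (min_r r1) in d3 d4 *.
    have : 2 * (a * b) * (1 - cos r) <= (a ^+ 2 + b ^+ 2) * r.
      apply: ler_pM; lra.
    nra.
  rewrite (min_l (ltW r1)) !mulr1 in d3 d4.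
  have : 2 * (a * b) * (1 - cos r) <= (a ^+ 2 + b ^+ 2) * 2.
    apply: ler_pM; lra.
  nra.
have r1 : 1 <= r.
  have := @pi_ge2 R; move/negbT: rpi; rewrite -ltNge. lra.
rewrite (min_l r1) !mulr1 in d3 d4.
nra.
Qed.

Lemma hk2_sym (a b r : R) : hk2 a b r = hk2 b a r.
Proof. by rewrite /hk2 (addrC (a ^+ 2)) (mulrC a). Qed.

Lemma hk2_upper_case (a b r x y : R) : 0 <= b -> b <= a -> 0 <= r ->
  x <= 1 -> -1 <= x -> y <= 1 -> -1 <= y -> x - y <= r ->
  a ^+ 2 * x - b ^+ 2 * y <=
    5 * Num.sqrt (a ^+ 2 + b ^+ 2) * Num.sqrt (hk2 a b r).
Proof.
move=> b0 ba r0 hx1 hx2 hy1 hy2 hxy.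
have a0 : 0 <= a by apply: le_trans ba.
set S := Num.sqrt (a ^+ 2 + b ^+ 2); set H := Num.sqrt (hk2 a b r).
have ab0 : 0 <= a * b by rewrite mulr_ge0.
have S0 : 0 <= S by rewrite sqrtr_ge0.
have H0 : 0 <= H by rewrite sqrtr_ge0.
have hk0 : 0 <= hk2 a b r by apply: le_trans (@hk2_ge a b r a0 b0); rewrite sqr_ge0.
have SS : S ^+ 2 = a ^+ 2 + b ^+ 2 by rewrite sqr_sqrtr // addr_ge0 // sqr_ge0.
have HH : H ^+ 2 = hk2 a b r by rewrite sqr_sqrtr.
have aS : a <= S by nra.
have bS : b <= S by nra.
have hab : (a - b) ^+ 2 <= H ^+ 2 by rewrite HH hk2_ge.
have habH : a - b <= H by nra.
have SH0 : 0 <= S * H by rewrite mulr_ge0.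
move: HH; rewrite /hk2; case: ifP => rpi HH.
  have c := @one_cos_ge r; rewrite r0 rpi /= in c.
  have e1 : a ^+ 2 * x - b ^+ 2 * y <= (a ^+ 2 - b ^+ 2) + b ^+ 2 * r.
    have -> : a ^+ 2 * x - b ^+ 2 * y = b ^+ 2 * (x - y) + (a ^+ 2 - b ^+ 2) * x by ring.
    have : 0 <= a ^+ 2 - b ^+ 2 by nra.
    have : 0 <= b ^+ 2 by rewrite sqr_ge0.
    nra.
  have e2 : a ^+ 2 - b ^+ 2 <= 2 * (S * H).
    have -> : a ^+ 2 - b ^+ 2 = (a - b) * (a + b) by ring.
    have : a + b <= 2 * S by lra.
    have : 0 <= a - b by lra.
    nra.
  have e3 : b ^+ 2 * r <= 3 * (S * H).
    have q1 : a * b * r ^+ 2 <= 9 * H ^+ 2.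
      have : 0 <= (a - b) ^+ 2 by rewrite sqr_ge0.
      have : 2 * (a * b) * (r ^+ 2 / 18) <= 2 * (a * b) * (1 - cos r).
        by apply: ler_wpM2l; [lra | exact: c].
      nra.
    have q2 : (b ^+ 2 * r) ^+ 2 <= (3 * (S * H)) ^+ 2.
      have -> : (b ^+ 2 * r) ^+ 2 = b ^+ 2 * (b ^+ 2 * r ^+ 2) by ring.
      have -> : (3 * (S * H)) ^+ 2 = S ^+ 2 * (9 * H ^+ 2) by ring.
      apply: ler_pM; rewrite ?sqr_ge0 ?mulr_ge0 ?sqr_ge0 //; first by nra.
      apply: le_trans q1; apply: ler_wpM2r; rewrite ?sqr_ge0 //; nra.
    have : 0 <= b ^+ 2 * r by rewrite mulr_ge0 ?sqr_ge0.
    nra.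
  lra.
have Hab : H = a + b.
  have : H ^+ 2 = (a + b) ^+ 2 by rewrite HH; ring.
  move/eqP; rewrite eqf_sqr => /orP[/eqP //|/eqP h]; lra.
rewrite Hab.
have : S ^+ 2 <= S * (a + b) by nra.
nra.
Qed.

Lemma hk2_upper (a b r x y : R) : 0 <= a -> 0 <= b -> 0 <= r ->
  `|x| <= 1 -> `|y| <= 1 -> `|x - y| <= r ->
  a ^+ 2 * x - b ^+ 2 * y <=
    5 * Num.sqrt (a ^+ 2 + b ^+ 2) * Num.sqrt (hk2 a b r).
Proof.
move=> a0 b0 r0; rewrite !ler_norml => /andP[hx1 hx2] /andP[hy1 hy2] /andP[hxy1 hxy2].
have [ba|ab] := leP b a; first by apply: hk2_upper_case => //; lra.
have := @hk2_upper_case b a r (- y) (- x) a0 (ltW ab) r0.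
rewrite -hk2_sym (addrC (b ^+ 2)) => h.
have -> : a ^+ 2 * x - b ^+ 2 * y = b ^+ 2 * - y - a ^+ 2 * - x by ring.
apply: h; lra.
Qed.
End T.
Section E.
Context {R : realType} {d : nat}.
Implicit Types (u v : 'rV[R]_d).

Lemma sum_sq_ge0 v : 0 <= \sum_(i < d) v ord0 i ^+ 2.
Proof. by apply: sumr_ge0 => i _; rewrite sqr_ge0. Qed.

Lemma eucl_ge0 v : 0 <= eucl v.
Proof. exact: sqrtr_ge0. Qed.

Lemma eucl_sq v : eucl v ^+ 2 = \sum_(i < d) v ord0 i ^+ 2.
Proof. by rewrite /eucl sqr_sqrtr // sum_sq_ge0. Qed.

Lemma euclN v : eucl (- v) = eucl v.
Proof. by rewrite /eucl; congr Num.sqrt; apply: eq_bigr => i _; rewrite mxE sqrrN. Qed.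

Lemma euclB u v : eucl (u - v) = eucl (v - u).
Proof. by rewrite -euclN opprB. Qed.

Lemma eucl0 : eucl (0 : 'rV[R]_d) = 0.
Proof. by rewrite /eucl big1 ?sqrtr0 // => i _; rewrite mxE expr0n. Qed.

Lemma eucl_eq0 v : eucl v = 0 -> forall i, v ord0 i = 0.
Proof.
move=> e0 i; have : \sum_(i < d) v ord0 i ^+ 2 = 0 by rewrite -eucl_sq e0 expr0n.
move/psumr_eq0P => /(_ (fun j _ => sqr_ge0 _) i isT) /eqP; rewrite sqrf_eq0 => /eqP //.
Qed.

Lemma cs u v : \sum_(i < d) u ord0 i * v ord0 i <= eucl u * eucl v.
Proof.
set A := eucl u; set B := eucl v.
have [A0|A0] := eqVneq A 0.
  rewrite big1 ?A0 ?mul0r // => i _; by rewrite (@eucl_eq0 u A0) mul0r.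
have [B0|B0] := eqVneq B 0.
  rewrite big1 ?B0 ?mulr0 // => i _; by rewrite (@eucl_eq0 v B0) mulr0.
have Ap : 0 < A by rewrite lt_def A0 eucl_ge0.
have Bp : 0 < B by rewrite lt_def B0 eucl_ge0.
have H : (\sum_(i < d) u ord0 i * v ord0 i) * (2 * A * B) <=
   \sum_(i < d) (u ord0 i ^+ 2 * B ^+ 2 + v ord0 i ^+ 2 * A ^+ 2).
  rewrite mulr_suml; apply: ler_sum => i _.
  set a := u ord0 i; set b := v ord0 i.
  have : 0 <= (a * B - b * A) ^+ 2 by rewrite sqr_ge0.
  nra.
move: H; rewrite big_split /= -!mulr_suml -!eucl_sq -/A -/B => H.
have : 0 < A * B by rewrite mulr_gt0.
nra.
Qed.

Lemma eucl_triangle u v : eucl (u + v) <= eucl u + eucl v.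
Proof.
have h : eucl (u + v) ^+ 2 <= (eucl u + eucl v) ^+ 2.
  rewrite eucl_sq (eq_bigr (fun i => u ord0 i ^+ 2 + v ord0 i ^+ 2 + 2 * (u ord0 i * v ord0 i))); last first.
    by move=> i _; rewrite mxE; ring.
  rewrite !big_split /= -mulr_sumr -!eucl_sq.
  have := cs u v; lra.
have := eucl_ge0 (u + v); have := eucl_ge0 u; have := eucl_ge0 v.
nra.
Qed.

Lemma eucl_lip (x y g : 'rV[R]_d) : `| eucl (x - g) - eucl (y - g) | <= eucl (x - y).
Proof.
have h1 := eucl_triangle (x - y) (y - g).
have h2 := eucl_triangle (y - x) (x - g).
rewrite !addrA !subrK in h1 h2.
rewrite (euclB y x) in h2.
rewrite ler_norml; apply/andP; split; lra.
Qed.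

Lemma eucl_cont g : continuous (fun x : 'rV[R]_d => eucl (x - g)).
Proof.
move=> x.
apply: (@continuous_comp _ _ _ (fun x : 'rV[R]_d => \sum_(i < d) (x - g) ord0 i ^+ 2) Num.sqrt);
  last exact: sqrt_continuous.
apply: (@continuous_big _ _ +%R 0 xpredT add_continuous _ _
   (fun i (x : 'rV[R]_d) => (x - g) ord0 i ^+ 2)) => i _ y.
have cc : {for y, continuous (fun z : 'rV[R]_d => (z - g) ord0 i)}.
  apply: (@continuous_comp _ _ _ (fun z : 'rV[R]_d => z - g) (fun M : 'rV[R]_d => M ord0 i)).
    apply: continuousB; [exact: cvg_id | exact: cst_continuous].
  exact: coord_continuous.
have -> : (fun x0 : 'rV_d => (x0 - g) ord0 i ^+ 2) =
  (fun z => (z - g) ord0 i * (z - g) ord0 i) by apply/funext => z; rewrite expr2.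
exact: (continuousM cc cc).
Qed.

End E.

Section M.
Context {R : realType} {d : nat} {V : set 'rV[R]_d}.

Definition tf (s : R) (g : 'rV[R]_d) : 'rV[R]_d -> R :=
  fun x => s * Num.min 1 (eucl (x - g)).

Lemma min_lip (a b : R) : `|Num.min 1 a - Num.min 1 b| <= `|a - b|.
Proof.
have [a1|a1] := leP a 1; have [b1|b1] := leP b 1.
- by [].
- by rewrite distrC [X in _ <= X]distrC !ger0_norm ?subr_ge0; lra.
- by rewrite !ger0_norm ?subr_ge0; lra.
- by rewrite subrr normr0.
Qed.

Lemma min01 (a : R) : 0 <= a -> 0 <= Num.min 1 a <= 1.
Proof.
move=> a0; have [a1|a1] := leP a 1.
  by rewrite a0 a1.
by rewrite ler01 lexx.
Qed.

Lemma tf_test s g : `|s| <= 1 -> flat_test V (tf s g).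
Proof.
move=> s1; split.
- apply: continuous_subspaceT => x.
  have h1 : {for x, continuous (fun x : 'rV[R]_d => Num.min 1 (eucl (x - g)))}.
    have := @continuous_min R 'rV[R]_d (fun=> 1) (fun x => eucl (x - g)) x.
    move=> /(_ (@cst_continuous 'rV[R]_d R 1 x) (eucl_cont g x)). by [].
  have h0 : {for x, continuous (fun _ : 'rV[R]_d => s)} by exact: cst_continuous.
  exact: (continuousM h0 h1).
- move=> x _; rewrite /tf normrM.
  have /andP[m0 m1] := @min01 _ (eucl_ge0 (x - g)).
  rewrite (ger0_norm m0); have := normr_ge0 s; nra.
- move=> x y _ _; rewrite /tf -mulrBr normrM.
  rewrite -[eucl (x - y)]mul1r; apply: ler_pM => //.
  apply: le_trans (min_lip _ _) _; exact: eucl_lip.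
Qed.

Lemma cst_test (c : R) : `|c| <= 1 -> flat_test V (fun _ => c).
Proof.
move=> c1; split => //.
- by apply: continuous_subspaceT => x; exact: cst_continuous.
- by move=> x y _ _; rewrite subrr normr0 eucl_ge0.
Qed.

Lemma zero_test : flat_test V (fun _ => 0).
Proof. by apply: cst_test; rewrite normr0. Qed.

Lemma fd_ge (p1 p2 : R * 'rV[R]_d) phi : inCV V p1 -> inCV V p2 -> flat_test V phi ->
  p1.1 * phi p1.2 - p2.1 * phi p2.2 <= flat_dist V p1 p2.
Proof.
move=> [h1 g1] [h2 g2] tphi.
apply: ub_le_sup; last by exists phi.
exists (p1.1 + p2.1) => _ [psi [[_ b _] ->]].
have := b _ g1; have := b _ g2; rewrite !ler_norml => /andP[? ?] /andP[? ?].
nra.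
Qed.

Lemma fd_le (p1 p2 : R * 'rV[R]_d) B :
  (forall phi, flat_test V phi -> p1.1 * phi p1.2 - p2.1 * phi p2.2 <= B) ->
  flat_dist V p1 p2 <= B.
Proof.
move=> hB; apply: ge_sup; first by exists (p1.1 * 0 - p2.1 * 0), (fun _ => 0); split => //; exact: zero_test.
by move=> _ [psi [tp ->]]; apply: hB.
Qed.

Lemma HK2_hk2 (p1 p2 : R * 'rV[R]_d) : 0 <= p1.1 -> 0 <= p2.1 ->
  HK2 p1 p2 = hk2 (Num.sqrt p1.1) (Num.sqrt p2.1) (eucl (p1.2 - p2.2)).
Proof. by move=> h1 h2; rewrite /HK2 /hk2 sqrtrM // !sqr_sqrtr. Qed.

Lemma lower {p1 p2 : R * 'rV[R]_d} : inCV V p1 -> inCV V p2 ->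
  HK2 p1 p2 <= 5 * flat_dist V p1 p2.
Proof.
move=> c1 c2; have [h1 _] := c1; have [h2 _] := c2.
rewrite HK2_hk2 //.
have e0 := eucl_ge0 (p1.2 - p2.2).
apply: hk2_lower; rewrite ?sqrtr_ge0 ?sqr_sqrtr //.
- have := @fd_ge p1 p2 _ c1 c2 (@cst_test 1 _); rewrite normr1 !mulr1; apply => //.
- have := @fd_ge p1 p2 _ c1 c2 (@cst_test (-1) _); rewrite normrN normr1.
  move/(_ (lexx 1)) => h; lra.
- have := @fd_ge p1 p2 _ c1 c2 (@tf_test 1 p2.2 _); rewrite normr1 /tf subrr eucl0.
  rewrite (min_r ler01); move/(_ (lexx 1)) => h; nra.
- have := @fd_ge p1 p2 _ c1 c2 (@tf_test (-1) p1.2 _); rewrite normrN normr1 /tf subrr eucl0.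
  rewrite (min_r ler01) (euclB p2.2); move/(_ (lexx 1)) => h; nra.
Qed.

Lemma upper {p1 p2 : R * 'rV[R]_d} : inCV V p1 -> inCV V p2 ->
  flat_dist V p1 p2 <= 5 * Num.sqrt (p1.1 + p2.1) * HK p1 p2.
Proof.
move=> c1 c2; have [h1 _] := c1; have [h2 _] := c2.
apply: fd_le => phi [_ b l].
have := b _ c1.2; have := b _ c2.2; have := l _ _ c1.2 c2.2.
rewrite /HK HK2_hk2 //.
move=> l12 bb2 bb1.
have := @hk2_upper _ (Num.sqrt p1.1) (Num.sqrt p2.1) (eucl (p1.2 - p2.2)) (phi p1.2) (phi p2.2)
  (sqrtr_ge0 _) (sqrtr_ge0 _) (eucl_ge0 _) bb1 bb2 l12.
by rewrite !sqr_sqrtr.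
Qed.

Lemma HK_ge {p1 p2 : R * 'rV[R]_d} : 0 <= p1.1 -> 0 <= p2.1 ->
  `|Num.sqrt p1.1 - Num.sqrt p2.1| <= HK p1 p2.
Proof.
move=> h1 h2; rewrite /HK HK2_hk2 //.
have := @hk2_ge _ (Num.sqrt p1.1) (Num.sqrt p2.1) (eucl (p1.2 - p2.2)) (sqrtr_ge0 _) (sqrtr_ge0 _).
move=> h.
rewrite -(sqrtr_sqr (Num.sqrt p1.1 - Num.sqrt p2.1)) ler_sqrt //.
by apply: le_trans h; rewrite sqr_ge0.
Qed.

End M.

Theorem propositionA6 (R : realType) (d : nat) (V : set 'rV[R]_d)
    (hV : closure_of_bounded_domain V) :
  (exists2 C : R, 0 < C &
     forall p1 p2 : R * 'rV[R]_d, inCV V p1 -> inCV V p2 ->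
       C^-1 * HK2 p1 p2 <= flat_dist V p1 p2 /\
       flat_dist V p1 p2 <= C * Num.sqrt (p1.1 + p2.1) * HK p1 p2) /\
  (forall U : set (R * 'rV[R]_d),
     open_in_CV V HK U <-> open_in_CV V (flat_dist V) U).
Proof.
split.
  exists 5 => // p1 p2 c1 c2; split; last exact: upper.
  have := lower c1 c2; lra.
move=> U; split => -[sub hU]; split => // p Up; have cp := sub p Up;
  have [e e0 he] := hU p Up.
  exists (e ^+ 2 / 5); first by rewrite divr_gt0 // exprn_gt0.
  move=> q cq Dq; apply: he => //.
  have h := lower cp cq.
  rewrite /HK -(ger0_norm (ltW e0)) -sqrtr_sqr ltr_sqrt ?exprn_gt0 //.
  lra.
have [h0 _] := cp.
set a := Num.sqrt p.1.
set K := Num.sqrt (p.1 + (a + 1) ^+ 2).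
have K0 : 0 <= K by rewrite sqrtr_ge0.
set M := 5 * K + 1.
have M0 : 0 < M by rewrite /M; lra.
exists (Num.min 1 (e / M)).
  by rewrite lt_min ltr01 divr_gt0.
move=> q cq; rewrite lt_min => /andP[H1 H2]; apply: he => //.
have [hq0 _] := cq.
have hab := HK_ge h0 hq0.
have HK0 : 0 <= HK p q by rewrite sqrtr_ge0.
have b0 : 0 <= Num.sqrt q.1 by rewrite sqrtr_ge0.
have a0 : 0 <= a by rewrite sqrtr_ge0.
have bb : Num.sqrt q.1 <= a + 1.
  move: hab; rewrite ler_norml -/a => /andP[h1 h2]; lra.
have hq : q.1 <= (a + 1) ^+ 2.
  rewrite -(sqr_sqrtr hq0); apply: ler_pM => //.
have SK : Num.sqrt (p.1 + q.1) <= K.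
  by rewrite ler_sqrt ?addr_ge0 ?sqr_ge0 // lerD2l.
have S0 : 0 <= Num.sqrt (p.1 + q.1) by rewrite sqrtr_ge0.
have up := upper cp cq.
have h3 : HK p q * M < e by rewrite -ltr_pdivlMr.
have h4 : 5 * Num.sqrt (p.1 + q.1) * HK p q <= HK p q * M.
  rewrite /M; nra.
lra.
Qed.
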